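(* Let $G$ be a graph with $\delta(G)\ge2$ and $b_{tR}(G)<\infty$. If $G$ has a unique $\gamma_{tR}(G)$-function, then $b_{tR}(G)=1$.
   Context: A TRDF on $G=(V,E)$ is a function $f:V\to\{0,1,2\}$ such that every $v$ with $f(v)=0$ has a neighbor $u$ with $f(u)=2$ and the subgraph induced by $\{v:f(v)>0\}$ has no isolated vertices; $\gamma_{tR}(G)$ is its minimum weight and a $\gamma_{tR}(G)$-function is a TRDF of that weight. $b_{tR}(G)$ is the minimum $|E'|$ such that $G-E'$ has no isolated vertices and $\gamma_{tR}(G-E')>\gamma_{tR}(G)$ ($\infty$ if none). $\delta(G)$ is the minimum degree. *)

(* Defs.v *)
(* Finite simple graphs as symmetric irreflexive relations. *)
From mathcomp Require Import all_boot.
Set Implicit Arguments. Unset Strict Implicit. Unset Printing Implicit Defensive.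

Section Defs.
Variable T : finType.

Definition edges (g : rel T) : {set {set T}} :=
  [set [set x; y] | x in T, y in T & g x y].

Definition delE (g : rel T) (E' : {set {set T}}) : rel T :=
  [rel x y | g x y && ([set x; y] \notin E')].

Definition deg (g : rel T) (v : T) : nat := #|[set u | g v u]|.

Definition no_isolated (g : rel T) : bool := [forall v, [exists u, g v u]].

Definition isTRDF (g : rel T) (f : {ffun T -> 'I_3}) : bool :=
  [forall v, ((f v : nat) == 0) ==> [exists u, g v u && ((f u : nat) == 2)]] &&
  [forall v, (0 < f v) ==> [exists u, g v u && (0 < f u)]].

Definition weight (f : {ffun T -> 'I_3}) : nat := \sum_(v : T) (f v : nat).

(* gamma_tR: minimum weight of a TRDF (2|V| is an upper bound for any weight;
   it is only the value used when no TRDF exists, which never matters below). *)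
Definition gammatR (g : rel T) : nat :=
  \big[minn/(2 * #|T|)]_(f : {ffun T -> 'I_3} | isTRDF g f) weight f.

Definition is_gammatR_function (g : rel T) (f : {ffun T -> 'I_3}) : Prop :=
  isTRDF g f /\ weight f = gammatR g.

Definition btR_set (g : rel T) (E' : {set {set T}}) : bool :=
  [&& E' \subset edges g, no_isolated (delE g E') & gammatR g < gammatR (delE g E')].

Definition btR_finite (g : rel T) : Prop := exists E', btR_set g E'.

Definition btR_eq (g : rel T) (b : nat) : Prop :=
  (exists E', btR_set g E' /\ #|E'| = b) /\ (forall E', btR_set g E' -> b <= #|E'|).
End Defs.

(* Main.v *)
Require Import Defs.
From mathcomp Require Import all_boot.
Set Implicit Arguments. Unset Strict Implicit.

Lemma bigmin_le (I:eqType) (r:seq I) (P:pred I) F x0 i :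
  i \in r -> P i -> \big[minn/x0]_(j <- r | P j) F j <= F i.
Proof.
elim: r => // a r IH; rewrite inE big_cons => /predU1P [<- -> | ir Pi].
  by rewrite geq_minl.
case: ifP => _; last exact: IH.
by rewrite geq_min IH ?orbT.
Qed.

Section S.
Variable T : finType.
Implicit Types (g : rel T) (f : {ffun T -> 'I_3}).

Lemma gam_le g f : isTRDF g f -> gammatR g <= weight f.
Proof. by move=> H; apply: bigmin_le => //; exact: mem_index_enum. Qed.

Lemma weight_le f : weight f <= 2 * #|T|.
Proof.
rewrite /weight -sum1_card big_distrr /=.
by apply: leq_sum => i _; rewrite muln1 -ltnS ltn_ord.
Qed.

Lemma gam_idx g : gammatR g <= 2 * #|T|.
Proof.
rewrite /gammatR; elim/big_ind: _ => //.
  by move=> x y Hx Hy; rewrite geq_min Hx.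
by move=> f _; apply: weight_le.
Qed.

Lemma gam_att g f0 : isTRDF g f0 -> exists f, isTRDF g f /\ weight f = gammatR g.
Proof.
move=> H0.
have : (gammatR g = 2 * #|T|) \/ exists f, isTRDF g f /\ weight f = gammatR g.
  rewrite /gammatR; elim/big_ind: _; first by left.
    move=> x y [->|[f [Hf <-]]] [->|[f' [Hf' <-]]].
    - by left; rewrite minnn.
    - by right; exists f'; split => //; apply/esym/minn_idPr/weight_le.
    - by right; exists f; split => //; apply/esym/minn_idPl/weight_le.
    - case: (leqP (weight f) (weight f')) => Hle.
        by right; exists f; split => //; apply/esym/minn_idPl.
      by right; exists f'; split => //; apply/esym/minn_idPr/ltnW.
  by move=> f Hf; right; exists f.
case=> [E|Hx]; last exact: Hx.
exists f0; split => //; apply/eqP; by rewrite eqn_leq gam_le // E weight_le.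
Qed.

Lemma trdf_sub g g' f : (forall x y, g' x y -> g x y) -> isTRDF g' f -> isTRDF g f.
Proof.
move=> S /andP [/forallP H1 /forallP H2]; apply/andP; split; apply/forallP => v.
  apply/implyP => /(implyP (H1 v)) /existsP [u /andP [gu fu]].
  by apply/existsP; exists u; rewrite S.
apply/implyP => /(implyP (H2 v)) /existsP [u /andP [gu fu]].
by apply/existsP; exists u; rewrite S.
Qed.

Definition one3 : 'I_3 := Ordinal (isT : 1 < 3).

Lemma ones_trdf g : no_isolated g -> isTRDF g [ffun _ => one3].
Proof.
move=> /forallP H; apply/andP; split; apply/forallP => v; rewrite ffunE //.
apply/implyP => _; have /existsP [u gu] := H v.
by apply/existsP; exists u; rewrite ffunE gu.
Qed.

Lemma gam_mono g g' : (forall x y, g' x y -> g x y) -> no_isolated g' ->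
  gammatR g <= gammatR g'.
Proof.
move=> S N; have [h [Hh <-]] := gam_att (ones_trdf N).
exact/gam_le/(trdf_sub S).
Qed.
End S.

Theorem mainTheorem14 (T : finType) (g : rel T) :
  symmetric g -> irreflexive g ->
  (forall v : T, 2 <= deg g v) ->
  btR_finite g ->
  (exists! f : {ffun T -> 'I_3}, is_gammatR_function g f) ->
  btR_eq g 1.
Proof.
move=> Hsym Hirr Hdeg [E0 HE0] [f [[Hf Hwf] Huniq]].
split; last first.
  move=> E' /and3P [_ N Hlt]; rewrite lt0n; apply/negP => /eqP/cards0_eq E'0.
  subst E'.
  have Ng : no_isolated g.
    apply/forallP => v; have /existsP [u /andP [gu _]] := forallP N v.
    by apply/existsP; exists u.
  have : gammatR (delE g set0) <= gammatR g.
    by apply: gam_mono => // x y gxy; rewrite /delE /= inE gxy.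
  by rewrite leqNgt Hlt.
have /andP [/forallP Hf1 /forallP Hf2] := Hf.
case: (boolP [exists u, (f u : nat) == 2]) => [/existsP [u Hu] | Hno]; last first.
  exfalso.
  have Hnz : forall v, (f v : nat) != 0.
    move=> v; apply/negP => /(implyP (Hf1 v)) /existsP [x /andP [_ fx]].
    by move/existsP: Hno; apply; exists x.
  move/and3P: HE0 => [_ N0 Hlt].
  have : isTRDF (delE g E0) f.
    apply/andP; split; apply/forallP => v; apply/implyP.
      by rewrite (negbTE (Hnz v)).
    move=> _; have /existsP [x Hx] := forallP N0 v.
    by apply/existsP; exists x; rewrite Hx lt0n Hnz.
  move/gam_le; rewrite Hwf leqNgt Hlt //.

pose f' := [ffun x => if x == u then one3 else f x].
have f'u : f' u = one3 by rewrite ffunE eqxx.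
have f'E : forall x, x != u -> f' x = f x by move=> x /negbTE xu; rewrite ffunE xu.
have Hlw : weight f' < weight f.
  rewrite /weight (bigD1 u) //= [X in _ < X](bigD1 u) //= f'u (eqP Hu).
  rewrite (eq_bigr (fun i => (f i : nat))); last by move=> i /f'E ->.
  by rewrite ltn_add2r.
have Hnot : ~~ isTRDF g f'.
  apply/negP => /gam_le; rewrite -Hwf leqNgt Hlw //.
have [w /andP [Hw0 Hw2]] : exists w, ((f' w : nat) == 0) &&
    ~~ [exists x, g w x && ((f' x : nat) == 2)].
  apply/existsP; apply: contraR Hnot => /existsPn H.
  apply/andP; split; apply/forallP => v.
    by apply/implyP => Hv; move: (H v); rewrite Hv /= negbK.
  apply/implyP => Hv; have : (0 < f v).
    by case: (eqVneq v u) => [->|/f'E <-] //; rewrite (eqP Hu).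
  move/(implyP (Hf2 v)) => /existsP [x /andP [gx fx]].
  apply/existsP; exists x; rewrite gx /=.
  by case: (eqVneq x u) => [->|/f'E ->] //; rewrite f'u.
have wu : w != u by apply/eqP => E; move: Hw0; rewrite E f'u.
have fw0 : (f w : nat) == 0 by rewrite -f'E.
have Hw2' : forall y, g w y -> y != u -> (f y : nat) != 2.
  move=> y gy yu; apply/negP => fy; move/existsP: Hw2; apply; exists y.
  by rewrite gy f'E.
have gwu : g w u.
  have /existsP [x /andP [gx fx]] := implyP (Hf1 w) fw0.
  case: (eqVneq x u) => [<- //|xu]; by move: (Hw2' x gx xu); rewrite fx.
pose E' : {set {set T}} := [set [set u; w]].
have N' : no_isolated (delE g E').
  apply/forallP => v; have := Hdeg v; rewrite /deg => /card_gt1P [y1 [y2 []]].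
  rewrite !inE => gy1 gy2 y12.
  case: (boolP ([set v; y1] \in E')) => H1.
    apply/existsP; exists y2; rewrite /delE /= gy2 /=; apply/negP => H2.
    move: H1 H2; rewrite /E' !inE => /eqP <- /eqP E12.
    have : y2 \in [set v; y1] by rewrite -E12 !inE eqxx orbT.
    rewrite !inE => /orP [/eqP E2|/eqP E2].
      by move: gy2; rewrite E2 Hirr.
    by move: y12; rewrite E2 eqxx.
  by apply/existsP; exists y1; rewrite /delE /= gy1.
have Hsub : forall x y, delE g E' x y -> g x y by move=> x y /andP [].
exists E'; split; last by rewrite cards1.
apply/and3P; split => //.
  apply/subsetP => e; rewrite inE => /eqP ->.
  apply/imset2P; exists u w => //; rewrite inE Hsym //.
rewrite ltn_neqAle gam_mono // andbT; apply/negP => /eqP Eg.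
have [h [Hh Hwh]] := gam_att (ones_trdf N').
have Hfh : f = h by apply: Huniq; split; [exact: trdf_sub Hh | rewrite Hwh Eg].
move: Hh; rewrite -Hfh => /andP [/forallP H1 _].
have /existsP [y /andP [/andP [gy ny] fy]] := implyP (H1 w) fw0.
case: (eqVneq y u) => [yu|yu]; last by move: (Hw2' y gy yu); rewrite fy.
by move: ny; rewrite yu /E' !inE setUC eqxx.
Qed.
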